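(* Let $\mathcal{X}=\mathbb{R}$, let $t_1,\dots,t_n$ be $n$ distinct real numbers, and let $\mathcal{H}=\{x\mapsto 2I(x\le t)-1: t\in\{t_1,\dots,t_n\}\}$. Then for every integer $k\ge0$, \[ \mathrm{ELdim}(\mathcal{H},k)=\max\Big\{t:\binom{t}{\le k+1}\le n\Big\}. \]
   Context: $\binom{t}{\le j}=\sum_{i=0}^{j}\binom{t}{i}$. Extended mistake tree w.r.t. $\mathcal{H}$: a finite full binary tree (possibly a single leaf) in which each internal node $v$ is labeled by $x_v\in\mathcal{X}$ and has two solid downward edges, to its left child (label $-1$) and right child (label $+1$), plus one dashed downward edge to one of its two children; each leaf is labeled by some $h\in\mathcal{H}$ with $h(x_v)$ equal to the direction label at every internal node $v$ on the root-to-leaf path. A root-to-leaf path chooses at each internal node one downward edge; its length is its number of edges. The tree is $(k,m)$-difficult if every root-to-leaf path using at most $k$ solid edges has length at least $m$. $\mathrm{ELdim}(\mathcal{H},k)$ is the supremum of $m$ such that a $(k,m)$-difficult extended mistake tree w.r.t. $\mathcal{H}$ exists. *)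

(* Defs.v *)
From Stdlib Require Import Reals.
From mathcomp Require Import all_boot.
Set Implicit Arguments. Unset Strict Implicit. Unset Printing Implicit Defensive.

Definition binom_le (t j : nat) : nat := \sum_(i < j.+1) 'C(t, i).

(* Labels: true = +1, false = -1. *)

(* Extended tree over instance type X: a leaf carries a hypothesis
   X -> bool; an internal node carries x_v, a left child (label -1),
   a right child (label +1), and a dashed edge going to the right child
   if the boolean is true and to the left child otherwise. *)
Inductive etree (X : Type) : Type :=
| ELeaf : (X -> bool) -> etree X
| ENode : X -> bool -> etree X -> etree X -> etree X.
Arguments ELeaf {X}.
Arguments ENode {X}.

Fixpoint consistent_with (X : Type) (H : (X -> bool) -> Prop)
    (C : seq (X * bool)) (T : etree X) : Prop :=
  match T with
  | ELeaf h => H h /\ (forall c, List.In c C -> h c.1 = c.2)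
  | ENode x _ l r =>
      consistent_with H ((x, false) :: C) l /\ consistent_with H ((x, true) :: C) r
  end.

Definition ext_mistake_tree (X : Type) (H : (X -> bool) -> Prop) (T : etree X) : Prop :=
  consistent_with H [::] T.

Inductive edge := SolidL | SolidR | Dashed.

Definition is_solid (e : edge) : bool :=
  match e with Dashed => false | _ => true end.

Fixpoint rtl_path (X : Type) (T : etree X) (p : seq edge) : Prop :=
  match T, p with
  | ELeaf _, [::] => True
  | ELeaf _, _ :: _ => False
  | ENode _ _ _ _, [::] => False
  | ENode _ d l r, e :: p' =>
      match e with
      | SolidL => rtl_path l p'
      | SolidR => rtl_path r p'
      | Dashed => rtl_path (if d then r else l) p'
      end
  end.

Definition difficult (X : Type) (k m : nat) (T : etree X) : Prop :=
  forall p, rtl_path T p -> count is_solid p <= k -> m <= size p.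

Definition is_max_nat (P : nat -> Prop) (M : nat) : Prop :=
  P M /\ (forall m, P m -> m <= M).

Definition ELdim_eq (X : Type) (H : (X -> bool) -> Prop) (k M : nat) : Prop :=
  is_max_nat (fun m => exists T, ext_mistake_tree H T /\ difficult k m T) M.

Definition thr (t : R) : R -> bool :=
  fun x => if Rle_dec x t then true else false.

Definition threshold_class (n : nat) (ts : 'I_n -> R) : (R -> bool) -> Prop :=
  fun h => exists i : 'I_n, h = thr (ts i).

(* Main.v *)
Require Import Defs.
From Stdlib Require Import Reals.
From mathcomp Require Import all_boot.
From mathcomp Require Import zify.
From Stdlib Require Import Lra.
Set Implicit Arguments.

Lemma binom_le0 j : binom_le 0 j = 1.
Proof.
rewrite /binom_le big_ord_recl bin0 big1 //.
Qed.

Lemma binom_le_n0 t : binom_le t 0 = 1.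
Proof. by rewrite /binom_le big_ord1 bin0. Qed.

Lemma binom_le_gt0 t j : 0 < binom_le t j.
Proof. by rewrite /binom_le big_ord_recl bin0. Qed.

Lemma binom_leS t j : binom_le t.+1 j.+1 = binom_le t j.+1 + binom_le t j.
Proof.
rewrite /binom_le big_ord_recl bin0.
rewrite (eq_bigr (fun i : 'I_j.+1 => 'C(t, i) + 'C(t, i.+1))); last first.
  by move=> i _; rewrite lift0 binS addnC.
have E : \sum_(i < j.+1) 'C(t, lift ord0 i) = \sum_(i < j.+1) 'C(t, i.+1).
  by apply: eq_bigr => i _; rewrite lift0.
rewrite big_split /= [in RHS]big_ord_recl bin0 E.
set A := \sum_(i < j.+1) _.
set B := \sum_(i < j.+1) _.
lia.
Qed.

Lemma binom_le_lt t j : t < binom_le t j.+1.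
Proof.
elim: t => [|t IH]; first by rewrite binom_le0.
rewrite binom_leS; have := binom_le_gt0 t j; lia.
Qed.

Definition okC (C : seq (R * bool)) (h : R -> bool) : bool :=
  all (fun c => h c.1 == c.2) C.

Lemma inC C h : (forall c, List.In c C -> h c.1 = c.2) <-> okC C h.
Proof.
elim: C => [|a C IH] /=; first by split.
split.
- move=> H; apply/andP; split; first by apply/eqP; apply: H; left.
  by apply/IH => c Hc; apply: H; right.
- move/andP=> [/eqP Ha /IH Hc] c [<-|]; first by [].
  exact: Hc.
Qed.

Section Main.
Variables (n : nat) (ts : 'I_n -> R).

Definition V (C : seq (R * bool)) : {set 'I_n} :=
  [set i | okC C (thr (ts i))].

Lemma V_split C x :
  #|V C| = #|V ((x, true) :: C)| + #|V ((x, false) :: C)|.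
Proof.
rewrite -(cardsID [set i | thr (ts i) x] (V C)).
congr (_ + _); apply: eq_card => i; rewrite !inE /okC /=.
- by rewrite eqb_id andbC.
- by rewrite eqbF_neg andbC.
Qed.

Lemma ub (T : etree R) : forall C k m,
  consistent_with (threshold_class ts) C T -> difficult k m T ->
  binom_le m k.+1 <= #|V C|.
Proof.
elim: T => [h|x d l IHl r IHr] C k m /=.
- move=> [[i ->] Hc] Hd.
  have := Hd [::] I isT => /=; rewrite leqn0 => /eqP ->.
  rewrite binom_le0; apply/card_gt0P; exists i.
  by rewrite inE; apply/inC.
- move=> [Hl Hr] Hd.
  have Hl0 : 0 < #|V ((x, false) :: C)|.
    by have := IHl _ 0 0 Hl (fun p _ _ => leq0n _); rewrite binom_le0.
  have Hr0 : 0 < #|V ((x, true) :: C)|.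
    by have := IHr _ 0 0 Hr (fun p _ _ => leq0n _); rewrite binom_le0.
  rewrite (V_split C x).
  case: m Hd => [|m] Hd; first by rewrite binom_le0; lia.
  rewrite binom_leS.
  case: d Hd => Hd.
  + have HD : binom_le m k.+1 <= #|V ((x, true) :: C)|.
      apply: IHr => // p Hp Hc.
      by have := Hd (Dashed :: p) Hp Hc.
    have HS : binom_le m k <= #|V ((x, false) :: C)|.
      case: k Hd HD => [|k] Hd HD; first by rewrite binom_le_n0.
      apply: IHl => // p Hp Hc.
      by have := Hd (SolidL :: p) Hp; rewrite /= add1n ltnS; apply.
    lia.
  + have HD : binom_le m k.+1 <= #|V ((x, false) :: C)|.
      apply: IHl => // p Hp Hc.
      by have := Hd (Dashed :: p) Hp Hc.
    have HS : binom_le m k <= #|V ((x, true) :: C)|.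
      case: k Hd HD => [|k] Hd HD; first by rewrite binom_le_n0.
      apply: IHr => // p Hp Hc.
      by have := Hd (SolidR :: p) Hp; rewrite /= add1n ltnS; apply.
    lia.
Qed.

Definition ltr (i j : 'I_n) : bool := if Rlt_dec (ts i) (ts j) then true else false.
Definition ler (i j : 'I_n) : bool := if Rle_dec (ts i) (ts j) then true else false.

Lemma leaf_ex (s : seq 'I_n) C :
  (forall i, i \in s -> okC C (thr (ts i))) -> 0 < size s ->
  exists T, consistent_with (threshold_class ts) C T /\ forall k, difficult k 0 T.
Proof.
case: s => [|i s] // Hall _.
exists (ELeaf (thr (ts i))); split; last by [].
split; first by exists i.
by apply/inC; apply: Hall; rewrite mem_head.
Qed.

Lemma lb m : forall k (s : seq 'I_n) C, pairwise ltr s ->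
  (forall i, i \in s -> okC C (thr (ts i))) -> binom_le m k.+1 <= size s ->
  exists T, consistent_with (threshold_class ts) C T /\ difficult k m T.
Proof.
elim: m => [|m IH] k s C Hpw Hall Hsz.
  have [T [HT Hd]] := @leaf_ex s C Hall (leq_trans (binom_le_gt0 0 k.+1) Hsz).
  by exists T.
move: Hsz; rewrite binom_leS => Hsz.
set a := size s - binom_le m k.
have Hsz2 : size (drop a s) = binom_le m k.
  rewrite size_drop /a; lia.
have Hsz1 : binom_le m k.+1 <= size (take a s).
  rewrite size_take /a; case: ifP; lia.
have := binom_le_gt0 m k; rewrite -Hsz2.
case Es2: (drop a s) => [|j s2] // _.
have Hs : s = take a s ++ j :: s2 by rewrite -Es2 cat_take_drop.
move: Hpw; rewrite Hs pairwise_cat => /and3P [Hrel Hp1 /= /andP [Hj Hp2]].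
have Hin1 : forall i, i \in take a s -> i \in s.
  by move=> i Hi; rewrite Hs mem_cat Hi.
have Hin2 : forall i, i \in j :: s2 -> i \in s.
  by move=> i Hi; rewrite Hs mem_cat Hi orbT.
have [L [HL HdL]] : exists L, consistent_with (threshold_class ts) ((ts j, false) :: C) L
    /\ difficult k m L.
  apply: (IH k (take a s)) => // i Hi; rewrite /okC /= -/(okC C _) Hall ?Hin1 // andbT.
  move/allrelP: Hrel => /(_ i j Hi (mem_head _ _)).
  rewrite /ltr /thr; case: Rlt_dec => // H _.
  by case: Rle_dec => // H'; exfalso; lra.
have HR0 : forall i, i \in j :: s2 -> okC ((ts j, true) :: C) (thr (ts i)).
  move=> i Hi; rewrite /okC /= -/(okC C _) Hall ?Hin2 // andbT.
  move: Hi; rewrite inE => /orP [/eqP ->|Hi].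
    by rewrite /thr; case: Rle_dec => // H; exfalso; lra.
  move/allP: Hj => /(_ i Hi).
  rewrite /ltr /thr; case: Rlt_dec => // H _.
  by case: Rle_dec => // H'; exfalso; lra.
have [R0 [HR HdR]] : exists R0, consistent_with (threshold_class ts) ((ts j, true) :: C) R0
    /\ forall k', k = k'.+1 -> difficult k' m R0.
  case Ek: k => [|k'].
    have [T [HT _]] := @leaf_ex (j :: s2) _ HR0 isT.
    by exists T; split => // k'.
  have P1 : pairwise ltr (j :: s2) by rewrite /= Hj.
  have P2 : binom_le m k'.+1 <= size (j :: s2) by rewrite -Es2 Hsz2 Ek.
  have [T [HT Hd]] := IH k' (j :: s2) _ P1 HR0 P2.
  by exists T; split => // k'' [<-].
exists (ENode (ts j) false L R0); split; first by split.
move=> [|e p] //= Hp Hc.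
case: e Hp Hc => /= Hp Hc.
- by rewrite ltnS; apply: HdL => //; move: Hc; rewrite add1n; lia.
- case Ek: k Hc => [|k'] Hc; first by move: Hc; rewrite add1n.
  by rewrite ltnS; apply: (HdR k') => //; move: Hc; rewrite add1n ltnS.
- by rewrite ltnS; apply: HdL.
Qed.

Lemma sorted_ex : injective ts -> exists s, pairwise ltr s /\ size s = n.
Proof.
move=> inj.
have tot : total ler.
  move=> i j; rewrite /ler; case: Rle_dec => //= H; case: Rle_dec => // H'; lra.
have tr : transitive ler.
  move=> j i l; rewrite /ler; case: Rle_dec => // H1 _; case: Rle_dec => // H2 _.
  by case: Rle_dec => // H3; lra.
exists (sort ler (enum 'I_n)); split; last by rewrite size_sort size_enum_ord.
have : pairwise ler (sort ler (enum 'I_n)) by rewrite -sorted_pairwise // sort_sorted.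
have : uniq (sort ler (enum 'I_n)) by rewrite sort_uniq enum_uniq.
elim: (sort ler (enum 'I_n)) => [|x s IH] //= /andP [Hx Hu] /andP [Hle Hp].
rewrite IH // andbT; apply/allP => y Hy.
move/allP: Hle => /(_ y Hy); rewrite /ler /ltr.
case: Rle_dec => // H _; case: Rlt_dec => // H'; exfalso.
have E : ts x = ts y by lra.
by move: Hx; have -> := inj _ _ E; rewrite Hy.
Qed.

Lemma V_le C : #|V C| <= n.
Proof. by have := max_card (V C); rewrite card_ord. Qed.

End Main.

Theorem mainTheorem9 (n : nat) (ts : 'I_n -> R) (n_pos : 0 < n)
    (ts_inj : injective ts) (k : nat) :
  exists M : nat,
    is_max_nat (fun t => binom_le t k.+1 <= n) M /\
    ELdim_eq (threshold_class ts) k M.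
Proof.
have exP : exists t, (fun t => binom_le t k.+1 <= n) t by exists 0; rewrite binom_le0.
have ubP : forall t, (fun t => binom_le t k.+1 <= n) t -> t <= n.
  by move=> t /= Ht; have := binom_le_lt t k; lia.
case: (ex_maxnP exP ubP) => M PM maxM.
exists M; split; first by split.
split.
- have [s [Hs Hsz]] := sorted_ex ts_inj.
  have Hb : binom_le M k.+1 <= size s by rewrite Hsz.
  have [T [HT Hd]] := @lb n ts M k s [::] Hs (fun _ _ => isT) Hb.
  by exists T.
- move=> m [T [HT Hd]]; apply: maxM.
  have := @ub n ts T [::] k m HT Hd; have := @V_le n ts [::]; lia.
Qed.
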